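(* Let $x_1,x_2,\dots$ be a sequence of vectors in $\mathbb{R}^n$. Suppose there is a function $C:\mathbb{N}^n\to\mathbb{R}\setminus\{0\}$ such that for every $m\in\mathbb{N}$, $\sum_{\substack{m_1+\cdots+m_n=m\\ 0<m_1<\cdots<m_n}} C(m_1,\dots,m_n)\det[x_{m_1},x_{m_2},\dots,x_{m_n}]=0$. Then the sequence $(x_i)$ is contained in a proper linear subspace of $\mathbb{R}^n$.
   Context: $[x_{m_1},\dots,x_{m_n}]$ denotes the $n\times n$ matrix with these columns; the sum is over integer tuples. *)

(* Defs.v *)
From HB Require Import structures.
From mathcomp Require Import all_boot all_order all_algebra.
From mathcomp Require Import reals.
Set Implicit Arguments. Unset Strict Implicit. Unset Printing Implicit Defensive.
Import Order.TTheory GRing.Theory Num.Theory.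
Local Open Scope ring_scope.

(* Index tuples (m_1,...,m_n) with each m_i <= m, encoded as finite functions
   'I_n -> 'I_m.+1 (every admissible tuple with sum m has entries <= m). *)
Definition admissible (n m : nat) (f : {ffun 'I_n -> 'I_m.+1}) : bool :=
  [&& (\sum_(i < n) (f i : nat) == m)%N,
      [forall i : 'I_n, (0 < (f i : nat))%N] &
      [forall i : 'I_n, forall j : 'I_n, (i < j)%N ==> ((f i : nat) < (f j : nat))%N]].

Definition tuple_of (n m : nat) (f : {ffun 'I_n -> 'I_m.+1}) : {ffun 'I_n -> nat} :=
  [ffun i => (f i : nat)].

Definition colmx (R : realType) (n m : nat) (x : nat -> 'rV[R]_n)
  (f : {ffun 'I_n -> 'I_m.+1}) : 'M[R]_n :=
  \matrix_(i < n, j < n) x (f j : nat) 0 i.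

Definition detsum (R : realType) (n : nat) (C : {ffun 'I_n -> nat} -> R)
  (x : nat -> 'rV[R]_n) (m : nat) : R :=
  \sum_(f : {ffun 'I_n -> 'I_m.+1} | admissible f) C (tuple_of f) * \det (colmx x f).

(* Main.v *)
Require Import Defs.
From HB Require Import structures.
From mathcomp Require Import all_boot all_order all_algebra.
From mathcomp Require Import reals.
From mathcomp Require Import zify.
From Stdlib Require Import Classical.
Import Order.TTheory GRing.Theory Num.Theory.
Local Open Scope ring_scope.

Definition Uk {F : fieldType} {n : nat} (x : nat -> 'rV[F]_n) (k : nat) : 'M[F]_n :=
  (\sum_(i < k) <<x i.+1>>)%MS.

Definition dk {F : fieldType} {n : nat} (x : nat -> 'rV[F]_n) (k : nat) : nat :=
  \rank (Uk x k).

Lemma UkS {F : fieldType} {n : nat} (x : nat -> 'rV[F]_n) k :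
  Uk x k.+1 = (Uk x k + <<x k.+1>>)%MS.
Proof. by rewrite /Uk big_ord_recr. Qed.

Lemma Uk0 {F : fieldType} {n : nat} (x : nat -> 'rV[F]_n) : Uk x 0 = 0.
Proof. by rewrite /Uk big_ord0. Qed.

Lemma dk0 {F : fieldType} {n : nat} (x : nat -> 'rV[F]_n) : dk x 0 = 0%N.
Proof. by rewrite /dk Uk0 mxrank0. Qed.

Lemma UkSl {F : fieldType} {n : nat} (x : nat -> 'rV[F]_n) k : (Uk x k <= Uk x k.+1)%MS.
Proof. by rewrite UkS addsmxSl. Qed.

Lemma UkSr {F : fieldType} {n : nat} (x : nat -> 'rV[F]_n) k : (x k.+1 <= Uk x k.+1)%MS.
Proof. by rewrite UkS; apply: submx_trans (addsmxSr _ _); rewrite genmxE. Qed.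

Lemma dkS {F : fieldType} {n : nat} (x : nat -> 'rV[F]_n) k : (dk x k.+1 <= (dk x k).+1)%N.
Proof.
rewrite /dk UkS; apply: leq_trans (mxrank_adds_leqif _ _) _.
rewrite genmxE; have := rank_leq_row (x k.+1); lia.
Qed.

Lemma Uk_mono {F : fieldType} {n : nat} (x : nat -> 'rV[F]_n) k k' :
  (k <= k')%N -> (Uk x k <= Uk x k')%MS.
Proof.
move=> /subnK <-; elim: (k' - k)%N => [|p IH]; first by rewrite add0n.
by apply: submx_trans IH _; rewrite addSn UkSl.
Qed.

Lemma dk_mono {F : fieldType} {n : nat} (x : nat -> 'rV[F]_n) k k' :
  (k <= k')%N -> (dk x k <= dk x k')%N.
Proof. by move=> H; apply: mxrankS; apply: Uk_mono. Qed.

Lemma dk_le {F : fieldType} {n : nat} (x : nat -> 'rV[F]_n) k : (dk x k <= n)%N.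
Proof. exact: rank_leq_col. Qed.

Lemma x_in_Uk {F : fieldType} {n : nat} (x : nat -> 'rV[F]_n) i k :
  (0 < i)%N -> (i <= k)%N -> (x i <= Uk x k)%MS.
Proof.
case: i => // i _ Hk; apply: submx_trans (UkSr x i) _; exact: Uk_mono.
Qed.

Lemma rank_sum_le {F : fieldType} {n : nat} (I : finType) (P : pred I)
  (v : I -> 'rV[F]_n) :
  (\rank (\sum_(i | P i) <<v i>>)%MS <= \sum_(i | P i) 1)%N.
Proof.
apply: (big_ind2 (fun (A : 'M[F]_n) (k : nat) => \rank A <= k)%N).
- by rewrite mxrank0.
- move=> A1 k1 A2 k2 H1 H2; apply: leq_trans (mxrank_adds_leqif _ _) _.
  exact: leq_add.
- by move=> i _; rewrite genmxE rank_leq_row.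
Qed.

Lemma exP_lem {F : fieldType} {n : nat} (x : nat -> 'rV[F]_n) (K j : nat) :
  exists k, ((j <= dk x k) || (K <= k))%N.
Proof. by exists K; rewrite leqnn orbT. Qed.

Definition mseq {F : fieldType} {n : nat} (x : nat -> 'rV[F]_n) (K j : nat) : nat :=
  ex_minn (exP_lem x K j).

Lemma M1 {F : fieldType} {n : nat} (x : nat -> 'rV[F]_n) K j :
  (n <= dk x K)%N -> (j <= n)%N -> (j <= dk x (mseq x K j))%N.
Proof.
move=> HK Hj; rewrite /mseq; case: ex_minnP => mj /orP [//|HKm] Hmin.
have : (mj <= K)%N by apply: Hmin; rewrite leqnn orbT.
move=> H; have -> : mj = K by apply/eqP; rewrite eqn_leq H HKm.
exact: leq_trans HK.
Qed.

Lemma M2 {F : fieldType} {n : nat} (x : nat -> 'rV[F]_n) K j k :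
  (j <= dk x k)%N -> (mseq x K j <= k)%N.
Proof.
move=> H; rewrite /mseq; case: ex_minnP => mj _ Hmin; apply: Hmin; by rewrite H.
Qed.

Lemma Mpos {F : fieldType} {n : nat} (x : nat -> 'rV[F]_n) K j :
  (n <= dk x K)%N -> (0 < j)%N -> (j <= n)%N -> (0 < mseq x K j)%N.
Proof.
move=> HK Hj Hjn; have := M1 _ _ _ HK Hjn; case: (mseq x K j) => // ; rewrite dk0; lia.
Qed.

Lemma Mstep {F : fieldType} {n : nat} (x : nat -> 'rV[F]_n) K j :
  (n <= dk x K)%N -> (0 < j)%N -> (j < n)%N -> (mseq x K j < mseq x K j.+1)%N.
Proof.
move=> HK Hj Hjn.
have H1 : (mseq x K j <= mseq x K j.+1)%N.
  apply: M2; apply: leq_trans (M1 _ _ _ HK Hjn); exact: leqnSn.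
have H2 := M1 _ _ _ HK Hjn.
have H3 := Mpos _ _ _ HK Hj (ltnW Hjn).
rewrite ltn_neqAle H1 andbT; apply/negP => /eqP E.
have H4 : (j.+1 <= dk x (mseq x K j))%N by rewrite E; exact: M1.
move: H3 H4; case E2: (mseq x K j) => [|p] // _ H4.
have H5 : (dk x p < j)%N.
  rewrite ltnNge; apply/negP => /(M2 x K) Hp; move: Hp; rewrite E2; lia.
have := dkS x p; lia.
Qed.

Lemma Mjump {F : fieldType} {n : nat} (x : nat -> 'rV[F]_n) K k :
  (n <= dk x K)%N -> dk x k.+1 = (dk x k).+1 -> mseq x K (dk x k.+1) = k.+1.
Proof.
move=> HK E.
have H1 : (mseq x K (dk x k.+1) <= k.+1)%N by apply: M2.
have H2 := M1 x K (dk x k.+1) HK (dk_le _ _).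
apply/eqP; rewrite eqn_leq H1 /=; rewrite ltnNge; apply/negP => H3.
have := dk_mono x _ _ H3; lia.
Qed.

Lemma max_rank {F : fieldType} {n : nat} (x : nat -> 'rV[F]_n) b k :
  (n - dk x k <= b)%N -> (forall K, dk x K < n)%N ->
  exists k0, forall k', (dk x k' <= dk x k0)%N.
Proof.
elim: b k => [|b IH] k Hb Hn.
  by have := Hn k; lia.
case: (classic (exists k', (dk x k < dk x k')%N)) => [[k' Hk']|Hno].
  apply: (IH k') => //; lia.
exists k => k'; rewrite leqNgt; apply/negP => H; apply: Hno; by exists k'.
Qed.

Theorem lemma1 (R : realType) (n : nat) (x : nat -> 'rV[R]_n)
  (C : {ffun 'I_n -> nat} -> R)
  (HC : forall t, C t != 0)
  (Hsum : forall m : nat, detsum C x m = 0) :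
  exists U : 'M[R]_n, (\rank U < n)%N /\ (forall i : nat, (0 < i)%N -> (x i <= U)%MS).
Proof.
case: (classic (exists K, (n <= dk x K)%N)) => [[K HK]|Hno]; last first.
  have Hn : forall K, (dk x K < n)%N.
    by move=> K; rewrite ltnNge; apply/negP => H; apply: Hno; exists K.
  have [k0 Hk0] := max_rank x n 0%N (leq_subr _ _) Hn.
  exists (Uk x k0); split; first exact: Hn.
  move=> i Hi.
  have Hs : (Uk x k0 <= Uk x (maxn i k0))%MS by apply: Uk_mono; exact: leq_maxr.
  have HU : (Uk x (maxn i k0) <= Uk x k0)%MS.
    by rewrite -(geq_leqif (mxrank_leqif_sup Hs)); exact: Hk0.
  apply: submx_trans HU; apply: x_in_Uk => //; exact: leq_maxl.
exfalso.
have dKn : dk x K = n by apply/eqP; rewrite eqn_leq dk_le HK.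
set m := mseq x K.
set M := (\sum_(j < n) m j.+1)%N.
have mleM : forall j : 'I_n, (m j.+1 < M.+1)%N.
  by move=> j; rewrite ltnS /M (bigD1 j) //= leq_addr.
have mpos : forall j : 'I_n, (0 < m j.+1)%N.
  by move=> j; apply: Mpos => //; exact: ltn_ord.
have mmono : forall i j : 'I_n, (i < j)%N -> (m i.+1 < m j.+1)%N.
  move=> i j Hij; apply: (@leq_ltn_trans (m j)).
    apply: M2; apply: leq_trans Hij (M1 _ _ _ HK _); exact: ltnW.
  apply: Mstep => //; first exact: leq_ltn_trans Hij.
pose S j := (\sum_(i < j) <<x (m i.+1)>>)%MS.
have SU : forall k, (Uk x k <= S (dk x k))%MS.
  elim=> [|k IH]; first by rewrite Uk0 sub0mx.
  have h1 := dkS x k; have h2 := dk_mono x k k.+1 (leqnSn k).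
  have [E|E] : dk x k.+1 = dk x k \/ dk x k.+1 = (dk x k).+1 by lia.
    rewrite E; apply: submx_trans IH.
    by rewrite -(geq_leqif (mxrank_leqif_sup (UkSl x k))) -/(dk x k.+1) -/(dk x k) E.
  have Hm := Mjump _ _ _ HK E.
  rewrite E /S big_ord_recr /= -/(S (dk x k)) UkS addsmxS //.
  by rewrite !genmxE /= -E /m Hm.
pose A := \matrix_(j < n, i < n) x (m j.+1) 0 i.
have rowA : forall j : 'I_n, row j A = x (m j.+1).
  by move=> j; apply/rowP => k; rewrite !mxE.
have SA : (S n <= A)%MS.
  by apply/sumsmx_subP => i _; rewrite genmxE -rowA row_sub.
have rA : \rank A = n.
  apply/eqP; rewrite eqn_leq rank_leq_col /=.
  apply: leq_trans (mxrankS SA).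
  by have := mxrankS (SU K); rewrite dKn; apply: leq_trans HK.
have detA : \det A != 0.
  by rewrite -unitfE -unitmxE -row_free_unit /row_free rA.
pose f0 : {ffun 'I_n -> 'I_M.+1} := [ffun j : 'I_n => inord (m j.+1)].
have f0E : forall j, (f0 j : nat) = m j.+1.
  by move=> j; rewrite ffunE inordK.
have adm0 : admissible f0.
  apply/and3P; split.
  - by apply/eqP; apply: eq_bigr => j _; rewrite f0E.
  - by apply/forallP => j; rewrite f0E.
  - apply/forallP => i; apply/forallP => j; apply/implyP => Hij.
    by rewrite !f0E; apply: mmono.
have col0 : colmx x f0 = A^T.
  by apply/matrixP => i j; rewrite !mxE f0E.
have uniq0 : forall f : {ffun 'I_n -> 'I_M.+1}, admissible f ->
    \det (colmx x f) != 0 -> f = f0.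
  move=> f /and3P [/eqP Hs /forallP Hp /forallP Hinc] Hdet.
  pose B := (colmx x f)^T.
  have rowB : forall i : 'I_n, row i B = x (f i).
    by move=> i; apply/rowP => k; rewrite !mxE.
  have rB : \rank B = n.
    apply/eqP; rewrite -/(row_free B) row_free_unit unitmxE det_tr unitfE //.
  have finc : forall i j : 'I_n, (i <= j)%N -> (f i <= f j)%N.
    move=> i j; rewrite leq_eqVlt => /orP [/eqP E|Hij].
      by have -> : i = j by apply: val_inj.
    by have := implyP (forallP (Hinc i) j) Hij => /ltnW.
  have key : forall j : 'I_n, (j.+1 <= dk x (f j))%N.
    move=> j.
    have HB : (B <= \sum_(i < n) <<row i B>>)%MS.
      by apply/row_subP => i; apply: (sumsmx_sup i) => //; rewrite genmxE.
    rewrite (bigID (fun i : 'I_n => (i <= j)%N)) /= in HB.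
    have r1 := mxrankS HB.
    have r2 := mxrank_adds_leqif (\sum_(i < n | (i <= j)%N) <<row i B>>)%MS
                 (\sum_(i < n | ~~ (i <= j)%N) <<row i B>>)%MS.
    have r3 : (\sum_(i < n | (i <= j)%N) <<row i B>> <= Uk x (f j))%MS.
      apply/sumsmx_subP => i Hi; rewrite genmxE rowB.
      by apply: x_in_Uk; [exact: Hp | exact: finc].
    have r4 := mxrankS r3.
    have r5 : (\rank (\sum_(i < n | ~~ (i <= j)%N) <<row i B>>)%MS
               <= \sum_(i < n | ~~ (i <= j)%N) 1)%N.
      exact: (rank_sum_le _ (fun i : 'I_n => ~~ (i <= j)%N) (fun i => row i B)).
    have c1 : (\sum_(i < n | (i <= j)%N) 1 + \sum_(i < n | ~~ (i <= j)%N) 1 = n)%N.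
      have E1 : (\sum_(i < n) 1)%N = n by rewrite sum1_card card_ord.
      by rewrite -[in RHS]E1 [in RHS](bigID (fun i : 'I_n => (i <= j)%N)).
    have c2 : (\sum_(i < n | (i <= j)%N) 1 = j.+1)%N.
      have E2 : (\sum_(i < j.+1) 1 = j.+1)%N by rewrite sum1_card card_ord.
      rewrite -[RHS]E2 (big_ord_widen n (fun _ => 1%N)) ?ltn_ord //.
    move: r1 r2 r4 r5 c1 c2; rewrite rB /dk => r1 r2 r4 r5 c1 c2.
    have r2' := r2.1.
    have t1 := leq_trans r1 r2'.
    have t2 := leq_trans t1 (leq_add r4 r5).
    move: t2; rewrite -[X in (X <= _)%N]c1 leq_add2r c2; done.
  have ge : forall j : 'I_n, (m j.+1 <= f j)%N by move=> j; apply: M2; exact: key.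
  have Heq : forall j : 'I_n, (f j : nat) = m j.+1.
    have Hz : (\sum_(j < n) (f j - m j.+1) == 0)%N.
      by rewrite sumnB // Hs subnn.
    move=> j; move: Hz; rewrite sum_nat_eq0 => /forallP /(_ j) /=.
    by have := ge j; lia.
  by apply/ffunP => j; apply/eqP; rewrite -val_eqE /= Heq f0E.
have := Hsum M; rewrite /detsum (bigD1 f0) //= big1.
  rewrite addr0 col0 det_tr => /eqP; rewrite mulf_eq0 (negbTE (HC _)) /=.
  by apply/negP.
move=> f /andP [Hf Hne].
case: (boolP (\det (colmx x f) == 0)) => [/eqP -> | Hd]; first by rewrite mulr0.
by rewrite (uniq0 f Hf Hd) eqxx in Hne.
Qed.
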